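(* Let $G$ and $H$ be finite simple connected graphs of order at least $3$. If the direct product $G \times H$ is well-dominated, then $\gamma(G \times H)=\gamma(G)\,n(H)=\gamma(H)\,n(G)$. Furthermore, $\gamma(G)=\alpha(G)$ and $\gamma(H)=\alpha(H)$.
   Context: $n(X)$ is the order of $X$; $\gamma(X)$ is the domination number (minimum size of a dominating set) and $\alpha(X)$ is the independence number (maximum size of an independent set). A graph is well-dominated if every minimal dominating set is a minimum dominating set. The direct product $G\times H$ has vertex set $V(G)\times V(H)$, with $(g_1,h_1)$ adjacent to $(g_2,h_2)$ iff $g_1g_2\in E(G)$ and $h_1h_2\in E(H)$. *)

(* Defs.v *)
From mathcomp Require Import all_boot.
Set Implicit Arguments. Unset Strict Implicit. Unset Printing Implicit Defensive.

Definition simple_graph (T : finType) (e : rel T) : Prop :=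
  symmetric e /\ irreflexive e.

Definition connected_graph (T : finType) (e : rel T) : Prop :=
  forall x y : T, connect e x y.

Definition dominating (T : finType) (e : rel T) (D : {set T}) : bool :=
  [forall v, (v \in D) || [exists u in D, e v u]].

Definition minimal_dominating (T : finType) (e : rel T) (D : {set T}) : bool :=
  minset (dominating e) D.

Definition gamma (T : finType) (e : rel T) : nat :=
  \big[minn/#|T|]_(D : {set T} | dominating e D) #|D|.
(* the default #|T| is harmless: [set: T] is always dominating *)

Definition independent (T : finType) (e : rel T) (S : {set T}) : bool :=
  [forall u in S, forall v in S, ~~ e u v].

Definition alpha (T : finType) (e : rel T) : nat :=
  \max_(S : {set T} | independent e S) #|S|.

Definition well_dominated (T : finType) (e : rel T) : Prop :=
  forall D : {set T}, minimal_dominating e D -> #|D| = gamma e.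

Definition direct_prod (T1 T2 : finType) (e1 : rel T1) (e2 : rel T2) :
  rel (T1 * T2) :=
  fun x y => e1 x.1 y.1 && e2 x.2 y.2.

(* Main.v *)
Require Import Defs.
From mathcomp Require Import all_boot.
Set Implicit Arguments. Unset Strict Implicit. Unset Printing Implicit Defensive.

Section Aux.
Variables (T : finType) (e : rel T).

Lemma bigmin_le (I : eqType) (s : seq I) (P : pred I) (F : I -> nat) x0 i :
  i \in s -> P i -> \big[minn/x0]_(j <- s | P j) F j <= F i.
Proof.
elim: s => [|a s IH] //; rewrite inE big_cons => /orP[/eqP<-|iS] Pi.
  by rewrite Pi geq_minl.
case: ifP => _; last exact: IH.
by rewrite geq_min IH ?orbT.
Qed.

Lemma gamma_le D : dominating e D -> gamma e <= #|D|.
Proof. by move=> HD; rewrite /gamma; apply: bigmin_le; rewrite ?mem_index_enum. Qed.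

Lemma dom_setT : dominating e [set: T].
Proof. by apply/forallP=> v; rewrite in_setT. Qed.

Lemma gamma_ex : exists2 D, dominating e D & #|D| = gamma e.
Proof.
have : #|T| = gamma e \/ exists2 D, dominating e D & #|D| = gamma e.
  rewrite /gamma; apply: (big_ind (fun x => #|T| = x \/ exists2 D, dominating e D & #|D| = x)).
  - by left.
  - move=> x y Hx Hy; rewrite /minn; case: ifP => _; by [].
  - by move=> D HD; right; exists D.
case=> [<-|//]; by exists [set: T]; [apply: dom_setT | rewrite cardsT].
Qed.

Lemma alpha_ex : exists2 S, independent e S & #|S| = alpha e.
Proof.
have [|S HS E] := @eq_bigmax_cond _ (fun S : {set T} => independent e S) (fun S => #|S|).
  apply/card_gt0P; exists set0; rewrite unfold_in /=.
  by apply/forall_inP=> u; rewrite in_set0.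
exists S => //; rewrite -E /alpha; apply: eq_bigl => x; by [].
Qed.

Lemma alpha_ge S : independent e S -> #|S| <= alpha e.
Proof. by move=> HS; apply: (@leq_bigmax_cond _ (fun S : {set T} => independent e S) (fun S => #|S|)). Qed.

Lemma max_indep S : simple_graph e -> independent e S -> #|S| = alpha e ->
  forall v, v \notin S -> exists2 u, u \in S & e v u.
Proof.
move=> [sym irr] HS Hc v vS.
case: (boolP [exists u in S, e v u]) => [/exists_inP[u uS evu]|/exists_inP nE].
  by exists u.
have Hi : independent e (v |: S).
  apply/forall_inP=> x /setU1P Hx; apply/forall_inP=> y /setU1P Hy.
  case: Hx => [->|xS]; case: Hy => [->|yS].
  - by rewrite irr.
  - by apply/negP=> evy; apply: nE; exists y.
  - by apply/negP=> exv; apply: nE; exists x; rewrite // sym.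
  - by move/forall_inP: HS => /(_ x xS) /forall_inP; apply.
have := alpha_ge Hi; rewrite cardsU1 vS -Hc /=.
by rewrite ltnn.
Qed.

End Aux.

Section Side.
Variables (G X : finType) (eG : rel G) (eX : rel X) (F : {set G} -> {set X}) (n : nat).
Hypotheses (sG : simple_graph eG) (wd : well_dominated eX) (n0 : 0 < n)
  (Fdom : forall D, dominating eG D -> dominating eX (F D))
  (Fmin : forall D, independent eG D -> dominating eG D -> minimal_dominating eX (F D))
  (Fcard : forall D, #|F D| = #|D| * n).

Lemma side : gamma eX = alpha eG * n /\ gamma eG = alpha eG.
Proof.
have [S HS Hc] := alpha_ex eG.
have Sdom : dominating eG S.
  apply/forallP=> v; case: (boolP (v \in S)) => //= vS.
  have [u uS evu] := max_indep sG HS Hc vS.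
  by apply/exists_inP; exists u.
have E1 : gamma eX = alpha eG * n by rewrite -(wd (Fmin HS Sdom)) Fcard Hc.
split=> //.
have [M HM HMc] := gamma_ex eG.
have [A Amin Asub] := minset_exists (Fdom HM).
have := subset_leq_card Asub; rewrite Fcard (wd Amin) E1 HMc leq_pmul2r //.
move=> le1; apply/eqP; rewrite eqn_leq le1 andbT -Hc.
exact: gamma_le.
Qed.
End Side.

Lemma has_nb (T : finType) (e : rel T) : connected_graph e -> 2 <= #|T| ->
  forall x, exists y, e x y.
Proof.
move=> Hc H2 x.
have [y yx] : exists y, y != x.
  apply/existsP; apply: contraLR H2; rewrite negb_exists => /forallP Hy.
  rewrite -leqNgt (cardD1 x) ltnS leqn0; apply/eqP/eq_card0 => z.
  by rewrite !inE; have := Hy z; rewrite negbK => /eqP ->; rewrite eqxx.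
have := Hc x y; case/connectP=> [[|z p]] /=; first by move=> _ E; rewrite E eqxx in yx.
by case/andP=> exz _ _; exists z.
Qed.

Theorem lemma10 (G H : finType) (eG : rel G) (eH : rel H) :
  simple_graph eG -> simple_graph eH ->
  connected_graph eG -> connected_graph eH ->
  3 <= #|G| -> 3 <= #|H| ->
  well_dominated (direct_prod eG eH) ->
  [/\ gamma (direct_prod eG eH) = gamma eG * #|H|,
      gamma eG * #|H| = gamma eH * #|G|,
      gamma eG = alpha eG &
      gamma eH = alpha eH].
Proof.
move=> sG sH cG cH G3 H3 wd.
have nG := has_nb cG (ltnW G3); have nH := has_nb cH (ltnW H3).
have [E1 E2] : gamma (direct_prod eG eH) = alpha eG * #|H| /\ gamma eG = alpha eG.
  apply: (@side G _ eG (direct_prod eG eH) (fun D => setX D [set: H]) #|H| sG wd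
  (ltnW (ltnW H3))).
- move=> D HD; apply/forallP=> [[g h]]; rewrite !inE /= andbT.
  case: (boolP (g \in D)) => //= gD.
  move/forallP: HD => /(_ g); rewrite (negbTE gD) /= => /exists_inP[d dD egd].
  have [h' ehh'] := nH h.
  by apply/exists_inP; exists (d, h'); rewrite ?inE ?dD //= /direct_prod /= egd.
- move=> D HI HD; apply/minsetP; split.
  + apply/forallP=> [[g h]]; rewrite !inE /= andbT.
    case: (boolP (g \in D)) => //= gD.
    move/forallP: HD => /(_ g); rewrite (negbTE gD) /= => /exists_inP[d dD egd].
    have [h' ehh'] := nH h.
    by apply/exists_inP; exists (d, h'); rewrite ?inE ?dD //= /direct_prod /= egd.
  + move=> B HB sB; apply/eqP; rewrite eqEsubset sB /=.
    apply/subsetP=> [[d h]]; rewrite !inE /= andbT => dD.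
    apply/negPn/negP=> nB.
    move/forallP: HB => /(_ (d, h)); rewrite (negbTE nB) /= => /exists_inP[[d' h'] uB].
    have := subsetP sB _ uB; rewrite !inE /= andbT => d'D.
    rewrite /direct_prod /= => /andP[edd' _].
    by move/forall_inP: HI => /(_ d dD) /forall_inP /(_ d' d'D); rewrite edd'.
- by move=> D; rewrite cardsX cardsT.
have [F1 F2] : gamma (direct_prod eG eH) = alpha eH * #|G| /\ gamma eH = alpha eH.
  apply: (@side H _ eH (direct_prod eG eH) (fun D => setX [set: G] D) #|G| sH wd
  (ltnW (ltnW G3))).
- move=> D HD; apply/forallP=> [[g h]]; rewrite !inE /=.
  case: (boolP (h \in D)) => //= hD.
  move/forallP: HD => /(_ h); rewrite (negbTE hD) /= => /exists_inP[d dD ehd].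
  have [g' egg'] := nG g.
  by apply/exists_inP; exists (g', d); rewrite ?inE ?dD //= /direct_prod /= egg'.
- move=> D HI HD; apply/minsetP; split.
  + apply/forallP=> [[g h]]; rewrite !inE /=.
    case: (boolP (h \in D)) => //= hD.
    move/forallP: HD => /(_ h); rewrite (negbTE hD) /= => /exists_inP[d dD ehd].
    have [g' egg'] := nG g.
    by apply/exists_inP; exists (g', d); rewrite ?inE ?dD //= /direct_prod /= egg'.
  + move=> B HB sB; apply/eqP; rewrite eqEsubset sB /=.
    apply/subsetP=> [[g d]]; rewrite !inE /= => dD.
    apply/negPn/negP=> nB.
    move/forallP: HB => /(_ (g, d)); rewrite (negbTE nB) /= => /exists_inP[[g' d'] uB].
    have := subsetP sB _ uB; rewrite !inE /= => d'D.
    rewrite /direct_prod /= => /andP[_ edd'].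
    by move/forall_inP: HI => /(_ d dD) /forall_inP /(_ d' d'D); rewrite edd'.
- by move=> D; rewrite cardsX cardsT mulnC.
split=> //; first by rewrite E1 E2.
by rewrite E2 F2 -E1 -F1.
Qed.
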